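(* Let $K$ be a field of characteristic zero. For each integer $n\ge1$ let $T_n\in\mathbb{Z}[x]$ be the polynomial of degree $n$ such that $\mathrm{trace}(\sigma^{(n)}(s))=T_n(\mathrm{trace}(s))$ for all $s\in SL_2(K)$, where $\sigma^{(n)}$ is the $n$-th symmetric power of the standard representation of $SL_2(K)$. Let $n_1,\dots,n_r$ and $m_1,\dots,m_t$ be positive integers. Suppose there exists an infinite subset $\Sigma\subset SL_2(K)$ whose elements have pairwise distinct traces such that $$\prod_{i=1}^{r}T_{n_i}(\mathrm{trace}(s))=\prod_{j=1}^{t}T_{m_j}(\mathrm{trace}(s))\quad\text{for every } s\in\Sigma.$$ Then $r=t$ and, after reordering, $n_i=m_i$ for all $i$. *)

(* Defs.v *)
From HB Require Import structures.
From mathcomp Require Import all_boot all_order all_algebra.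
From mathcomp Require Import boolp classical_sets cardinality.
Set Implicit Arguments. Unset Strict Implicit. Unset Printing Implicit Defensive.
Import Order.TTheory GRing.Theory Num.Theory.
Local Open Scope ring_scope.

(* The n-th symmetric power sigma^(n) of the standard representation of GL_2(K),
   as an (n+1)x(n+1) matrix in the monomial basis x^(n-k) y^k (k = 0..n) of
   Sym^n(K^2), where g = [[a,b],[c,d]] acts by x |-> a x + c y, y |-> b x + d y
   (i.e. g e1 = a e1 + c e2, g e2 = b e1 + d e2).  Column k is the image of
   x^(n-k) y^k = (a x + c y)^(n-k) (b x + d y)^k; entry (j,k) is the
   coefficient of x^(n-j) y^j in it, i.e.
   sum_i C(n-k,i) C(k,j-i) a^(n-k-i) c^i b^(k-(j-i)) d^(j-i). *)
Definition sympow (K : fieldType) (n : nat) (g : 'M[K]_2) : 'M[K]_(n.+1) :=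
  let a := g 0 0 in let b := g 0 1 in let c := g 1 0 in let d := g 1 1 in
  \matrix_(j < n.+1, k < n.+1)
    \sum_(i < j.+1)
      (('C(n - k, i) * 'C(k, j - i))%:R
        * a ^+ (n - k - i) * c ^+ i * b ^+ (k - (j - i)) * d ^+ (j - i)).

(* Main.v *)
Require Import Defs.
From HB Require Import structures.
From mathcomp Require Import all_boot all_order all_algebra.
From mathcomp Require Import boolp classical_sets cardinality.
From mathcomp Require Import ring.
Import Order.TTheory GRing.Theory Num.Theory.
Local Open Scope ring_scope.

Lemma low_form (R : comNzRingType) (A : seq nat) k :
  all (leq k.+1) A -> exists q : {poly R},
  \prod_(a <- A) (1 - 'X^a) = 1 - (count (pred1 k.+1) A)%:R * 'X^(k.+1) + 'X^(k.+2) * q.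
Proof.
elim: A => [|x A IH] /=.
  by move=> _; exists 0; rewrite big_nil mulr0 addr0 mul0r subr0.
rewrite big_cons; case/andP=> hx /IH [q ->].
case: (x =P k.+1) => [->|/eqP hne]; rewrite /= ?eqxx.
  exists (q + ('X^k) * (count (pred1 k.+1) A)%:R - ('X^(k.+1)) * q).
  rewrite !exprS natrD. ring.
rewrite ?add0n.
have : (k.+2 <= x)%N by rewrite ltn_neqAle eq_sym hne.
move/subnKC <-; set d := (x - k.+2)%N.
exists (q - 'X^d + 'X^d * 'X^(k.+1) * (count (pred1 k.+1) A)%:R - 'X^d * 'X^(k.+2) * q).
rewrite exprD !exprS. ring.
Qed.

Lemma ex_min (s : seq nat) : s != [::] -> exists2 m, m \in s & all (leq m) s.
Proof.
elim: s => [//|x s IH] _.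
case: (altP (s =P [::])) => [->|/IH [m ms hm]].
  by exists x; rewrite ?mem_head //= leqnn.
case: (leqP x m) => hxm.
  exists x; rewrite ?mem_head //= leqnn /=.
  by apply/allP=> y ys; apply: leq_trans hxm (allP hm y ys).
exists m; first by rewrite inE ms orbT.
by rewrite /= (ltnW hxm) hm.
Qed.

Lemma natr_inj0 (K : idomainType) : [pchar K] =i pred0 ->
  forall a b : nat, a%:R = b%:R :> K -> a = b.
Proof.
move=> /pcharf0P h0.
suff H : forall a b : nat, (a <= b)%N -> a%:R = b%:R :> K -> a = b.
  move=> a b; case: (leqP a b) => [|/ltnW] hab e; first exact: H.
  by apply/esym/H.
move=> a b hab e; move: e; rewrite -(subnKC hab) natrD -{1}(addr0 a%:R).
move/addrI/esym/eqP; rewrite h0 => /eqP ->; by rewrite addn0.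
Qed.

Lemma prod_perm (K : idomainType) : [pchar K] =i pred0 ->
  forall A B : seq nat, all (leq 1) A -> all (leq 1) B ->
  \prod_(a <- A) (1 - 'X^a) = \prod_(b <- B) (1 - 'X^b) :> {poly K} ->
  perm_eq A B.
Proof.
move=> ch A B; have [n] := ubnP (size A + size B).
elim: n A B => [//|n IH] A B hn hA hB e.
case: (altP ((A ++ B) =P [::])) => [|].
  by move/eqP; rewrite -size_eq0 size_cat addn_eq0 !size_eq0 => /andP[/eqP -> /eqP ->].
case/ex_min => m mAB hm.
have m1 : (1 <= m)%N.
  move: mAB; rewrite mem_cat => /orP[] mX; [exact: (allP hA) | exact: (allP hB)].
move: hm; rewrite all_cat => /andP[hmA hmB].
case: m m1 mAB hmA hmB => [//|k] _ mAB hmA hmB.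
have [qA eA] := @low_form K _ _ hmA.
have [qB eB] := @low_form K _ _ hmB.
have ec : count (pred1 k.+1) A = count (pred1 k.+1) B.
  have := congr1 (fun p : {poly K} => p`_(k.+1)) e.
  rewrite /= eA eB !coefD !coefN !coefXnM !mulr_natl !coefMn !coefXn !coef1 eqxx ltnSn /= !add0r !addr0 => /oppr_inj. exact: natr_inj0.
have mA : k.+1 \in A /\ k.+1 \in B.
  move: mAB; rewrite mem_cat -!has_pred1 !has_count ec.
  by rewrite orbb => h; split.
case: mA => mA mB.
have pA := perm_to_rem mA; have pB := perm_to_rem mB.
have nz : (1 - 'X^(k.+1) : {poly K}) != 0.
  apply/negP => /eqP /(congr1 (fun p : {poly K} => p.[0])).
  by rewrite !hornerE expr0n /= subr0 => /eqP; rewrite oner_eq0.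
move: e; rewrite (perm_big _ pA) (perm_big _ pB) !big_cons => /(mulfI nz) e.
apply: (perm_trans pA); rewrite perm_sym; apply: (perm_trans pB); rewrite perm_sym perm_cons.
apply: IH e.
- move: hn; rewrite (perm_size pA) (perm_size pB) /= addSn addnS.
  by move/ltnW; rewrite ltnS.
- by apply/allP => x /mem_rem; apply: (allP hA).
- by apply/allP => x /mem_rem; apply: (allP hB).
Qed.

Lemma tr_diag (K : fieldType) (n : nat) (l : K) :
  let s := diag_mx (\row_(i < 2) (if i == 0 then l else l^-1)) in
  \det s = l * l^-1 /\ \tr s = l + l^-1 /\
  \tr (sympow n s) = \sum_(j < n.+1) l ^+ (n - j) * l^-1 ^+ j.
Proof.
move=> s; split; last split.
- by rewrite det_diag !big_ord_recr big_ord0 /= !mxE /= mul1r.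
- by rewrite mxtrace_diag !big_ord_recr big_ord0 /= !mxE /= add0r.
rewrite /mxtrace; apply: eq_bigr => j _.
rewrite mxE big_ord_recl big1 ?addr0.
  rewrite !mxE /= subn0 bin0 binn mul1n expr0 mulr1 subnn expr0 mulr1 mul1r.
  by rewrite !mulr1n subn0.
move=> i _.
have -> : s 1 0 = 0 by rewrite !mxE.
by rewrite expr0n /= mulr0 !mul0r.
Qed.

Lemma Tn_eval (K : fieldType) (T : nat -> {poly int})
  (T_trace : forall n : nat, (0 < n)%N -> forall s : 'M[K]_2, \det s = 1 ->
      \tr (sympow n s) = (map_poly intr (T n)).[\tr s])
  n (n0 : (0 < n)%N) (l : K) (l0 : l != 0) :
  (1 - l^+2) * l^+n * (map_poly intr (T n)).[l + l^-1] = 1 - (l^+2)^+n.+1.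
Proof.
have [hd [ht hs]] := @tr_diag K n l.
rewrite -ht -(T_trace n n0) ?hd ?mulfV // hs.
set u := l^-1; set S := \sum_(_ < _) _.
have hu : l * u = 1 by rewrite mulfV.
have E : l ^+ n.+1 - u ^+ n.+1 = (l - u) * S by rewrite subrXX.
have hU : l ^+ n * u ^+ n = 1 by rewrite -exprMn hu expr1n.
have -> : (1 - l^+2) * l^+n * S = - (l * l^+n) * ((l - u) * S) + (1 - l * u) * l^+n * S by ring.
rewrite -E hu subrr !mul0r addr0 exprAC !exprS.
transitivity (- (l * l ^+ n) ^+ 2 + (l * u) * (l^+n * u^+n)); first by ring.
by rewrite hu hU mul1r expr0 mulr1 addrC expr2.
Qed.

Lemma prod_nseq (R : comNzRingType) (F : nat -> R) k a :
  \prod_(i <- nseq k a) F i = F a ^+ k.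
Proof. by elim: k => [|k IH]; rewrite ?big_nil ?expr0 // big_cons IH exprS. Qed.

Lemma G_eval (K : fieldType) (T : nat -> {poly int})
  (T_trace : forall n : nat, (0 < n)%N -> forall s : 'M[K]_2, \det s = 1 ->
      \tr (sympow n s) = (map_poly intr (T n)).[\tr s])
  (s : seq nat) (hs : all (fun n => 0 < n)%N s) (l : K) (l0 : l != 0) :
  \prod_(n <- s) (1 - l ^+ (n.+1).*2) =
  (1 - l^+2) ^+ (size s) * l ^+ (sumn s) *
  (\prod_(n <- s) map_poly intr (T n)).[l + l^-1].
Proof.
rewrite horner_prod; elim: s hs => [|n s IH] /=.
  by rewrite !big_nil expr0 !mul1r.
case/andP => n0 /IH e; rewrite !big_cons e -mul2n exprM -(@Tn_eval K T T_trace n n0 l l0).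
rewrite [_ ^+ (size s).+1]exprS exprD; ring.
Qed.

Lemma hornerX0 (K : idomainType) (s : seq nat) : all (leq 1) s ->
  (\prod_(a <- s) (1 - 'X^a) : {poly K}).[0] = 1.
Proof.
move=> hs; rewrite horner_prod big1_seq // => a /andP[_ /(allP hs)].
by case: a => [//|a] _; rewrite !hornerE /= ?expr0n ?subr0.
Qed.

Lemma cancel_X (K : idomainType) a b (L R : {poly K}) :
  L.[0] = 1 -> R.[0] = 1 -> 'X^a * L = 'X^b * R -> L = R.
Proof.
wlog hab : a b L R / (a <= b)%N.
  move=> W; case: (leqP a b) => h; first exact: W.
  by move=> hL hR e; symmetry; apply: (W b a) => //; apply: ltnW.
move=> hL hR; rewrite -(subnKC hab) exprD -mulrA.
have nz : 'X^a != 0 :> {poly K} by rewrite monic_neq0 ?monicXn.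
move/(mulfI nz) => eL; move: hL; rewrite eL.
case: (b - a)%N => [|k]; first by rewrite expr0 mul1r.
by rewrite hornerM hornerXn expr0n mul0r => /eqP; rewrite eq_sym oner_eq0.
Qed.

Lemma count2 (s : seq nat) : all (fun n => 0 < n)%N s ->
  count (pred1 2%N) (map (fun n => (n.+1).*2) s) = 0%N.
Proof. by elim: s => //= n s IH /andP[n0 /IH ->]; case: n n0. Qed.

Theorem lemma4p4 (K : fieldType) (charK0 : [pchar K] =i pred0)
  (T : nat -> {poly int})
  (T_deg : forall n : nat, (0 < n)%N -> size (T n) = n.+1)
  (T_trace : forall n : nat, (0 < n)%N -> forall s : 'M[K]_2, \det s = 1 ->
      \tr (sympow n s) = (map_poly intr (T n)).[\tr s])
  (ns ms : seq nat)
  (ns_pos : all (fun n => 0 < n)%N ns) (ms_pos : all (fun m => 0 < m)%N ms)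
  (Sigma : set 'M[K]_2)
  (Sigma_SL2 : forall s, Sigma s -> \det s = 1)
  (Sigma_inf : infinite_set Sigma)
  (Sigma_tr : forall s1 s2, Sigma s1 -> Sigma s2 -> \tr s1 = \tr s2 -> s1 = s2)
  (Heq : forall s, Sigma s ->
      \prod_(n <- ns) (map_poly intr (T n)).[\tr s]
      = \prod_(m <- ms) (map_poly intr (T m)).[\tr s]) :
  perm_eq ns ms.
Proof.
set Pn := \prod_(n <- ns) map_poly intr (T n) : {poly K}.
set Pm := \prod_(n <- ms) map_poly intr (T n) : {poly K}.
have ePQ : Pn = Pm.
  apply/eqP; rewrite -subr_eq0; apply/negPn/negP => nz.
  have [B sub sz] := infinite_set_fset (size (Pn - Pm)) Sigma_inf.
  set rs := map (fun s => \tr s) (finmap.enum_fset B).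
  have H2 : uniq rs.
    rewrite map_inj_in_uniq ?finmap.fset_uniq // => x y hx hy.
    by apply: Sigma_tr; apply: sub.
  have H1 : all (root (Pn - Pm)) rs.
    apply/allP => t /mapP [x hx ->].
    by rewrite /root hornerD hornerN !horner_prod Heq ?subrr //; apply: sub.
  by have := max_poly_roots nz H1 H2; rewrite size_map ltnNge sz.
set f := fun n : nat => (n.+1).*2.
set A := map f ns ++ nseq (size ms) 2%N.
set B := map f ms ++ nseq (size ns) 2%N.
have pt : forall l : K, l != 0 -> l ^+ (sumn ms) * \prod_(a <- A) (1 - l ^+ a)
    = l ^+ (sumn ns) * \prod_(b <- B) (1 - l ^+ b).
  move=> l l0; rewrite !big_cat !big_map !prod_nseq.
  rewrite (@G_eval K T T_trace _ ns_pos _ l0) (@G_eval K T T_trace _ ms_pos _ l0) -/Pn -/Pm ePQ.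
  rewrite /=; ring.
have hA : all (leq 1) A.
  by rewrite all_cat all_nseq /= orbT andbT; apply/allP => x /mapP [n _ ->].
have hB : all (leq 1) B.
  by rewrite all_cat all_nseq /= orbT andbT; apply/allP => x /mapP [n _ ->].
have ePoly : 'X^(sumn ms) * \prod_(a <- A) (1 - 'X^a)
    = 'X^(sumn ns) * \prod_(b <- B) (1 - 'X^b) :> {poly K}.
  apply/eqP; rewrite -subr_eq0; apply/negPn/negP => nz.
  set rs := map (fun i => (i.+1)%:R : K) (iota 0 (size
     ('X^(sumn ms) * \prod_(a <- A) (1 - 'X^a) - 'X^(sumn ns) * \prod_(b <- B) (1 - 'X^b) : {poly K}))).
  have H2 : uniq rs.
    rewrite map_inj_uniq ?iota_uniq // => i j /(@natr_inj0 K charK0) [] //.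
  have H1 : all (root ('X^(sumn ms) * \prod_(a <- A) (1 - 'X^a) - 'X^(sumn ns) * \prod_(b <- B) (1 - 'X^b) : {poly K})) rs.
    apply/allP => t /mapP [i _ ->].
    rewrite /root hornerD hornerN !hornerM !horner_prod !hornerXn.
    under eq_bigr do rewrite hornerD hornerN hornerXn hornerC.
    under [X in _ - _ * X]eq_bigr do rewrite hornerD hornerN hornerXn hornerC.
    rewrite pt ?subrr //.
    by move/pcharf0P: charK0 => ->.
  by have := max_poly_roots nz H1 H2; rewrite size_map size_iota ltnn.
have eAB := @cancel_X K _ _ _ _ (@hornerX0 K _ hA) (@hornerX0 K _ hB) ePoly.
have pAB := @prod_perm K charK0 _ _ hA hB eAB.
have sz : size ms = size ns.
  move/permP: pAB => /(_ (pred1 2%N)).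
  by rewrite !count_cat !count_nseq (count2 _ ns_pos) (count2 _ ms_pos) /= !mul1n.
move: pAB; rewrite /A /B sz perm_cat2r; apply: perm_map_inj.
by move=> x y /double_inj [].
Qed.
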